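(* Let $B,B'\in M_n(R)$ and suppose $B'$ is tropically similar to $B$, i.e. $B'=A^\nabla BA$ for some non-singular $A\in M_n(R)$. Then (a) $\det(B')\models_{gs}\det(B)$, with equality when $B'$ is non-singular; and (b) $\operatorname{tr}(B')\models_{gs}\operatorname{tr}(B)$, where $\operatorname{tr}$ denotes the sum of diagonal entries.
   Context: Supertropical semiring $R=T\cup G\cup\{-\infty\}$: $T=\mathcal G$ an ordered abelian group (tangible), $G=\{a^\nu\}$ a copy (ghost); $a+b$ is the element of larger $\nu$-value if the $\nu$-values differ and $a^\nu$ if equal; multiplication adds $\nu$-values, is ghost if a factor is ghost, $-\infty$ absorbing; $0_R=-\infty$, $1_R=0$. Ghost surpassing: $a\models_{gs}b$ iff $a=b$, or $a\in G$ and the $\nu$-value of $a$ is $\geq$ that of $b$. $\det(A)=\sum_{\sigma\in S_n}\prod_i a_{i,\sigma(i)}$; $A$ non-singular iff $\det(A)\in T$. $\operatorname{adj}(A)_{i,j}=\det(A_{j,i})$ (minor deleting row $j$, column $i$), and for non-singular $A$, $A^\nabla=\det(A)^{-1}\operatorname{adj}(A)$. *)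

(* Defs.v *)
From HB Require Import structures.
From mathcomp Require Import all_boot all_order all_algebra all_fingroup.
Set Implicit Arguments. Unset Strict Implicit. Unset Printing Implicit Defensive.
Import GRing.Theory.
Local Open Scope ring_scope.

Definition ordered_abgroup (G : zmodType) (le : rel G) : Prop :=
  [/\ reflexive le, antisymmetric le, transitive le, total le
    & forall a b c : G, le a b -> le (a + c) (b + c)].

Inductive stv (G : Type) : Type :=
  | NegInf : stv G             (* -oo = 0_R *)
  | Tan : G -> stv G
  | Gh : G -> stv G.           (* ghost a^nu *)
Arguments NegInf {G}.

Section Supertropical.
Variables (G : zmodType) (le : rel G).

Definition ltG (a b : G) : bool := le a b && ~~ le b a.

Definition nuv (x : stv G) : option G :=
  match x with NegInf => None | Tan a => Some a | Gh a => Some a end.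

Definition is_tangible (x : stv G) : bool :=
  if x is Tan _ then true else false.
Definition is_ghost (x : stv G) : bool :=
  if x is Gh _ then true else false.

Definition sadd (x y : stv G) : stv G :=
  match nuv x, nuv y with
  | None, _ => y
  | _, None => x
  | Some a, Some b => if ltG a b then y else if ltG b a then x else Gh a
  end.

Definition smul (x y : stv G) : stv G :=
  match x, y with
  | NegInf, _ => NegInf
  | _, NegInf => NegInf
  | Tan a, Tan b => Tan (a + b)
  | Tan a, Gh b | Gh a, Tan b | Gh a, Gh b => Gh (a + b)
  end.

Definition sone : stv G := Tan 0.

Definition gs (x y : stv G) : Prop :=
  x = y \/
  (match x with
   | Gh a => match nuv y with None => True | Some b => le b a end
   | _ => False
   end).

Definition sdet (n : nat) (A : 'M[stv G]_n) : stv G :=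
  \big[sadd/NegInf]_(s : 'S_n) \big[smul/sone]_(i < n) A i (s i).

Definition nonsingular (n : nat) (A : 'M[stv G]_n) : bool :=
  is_tangible (sdet A).

Definition strace (n : nat) (A : 'M[stv G]_n) : stv G :=
  \big[sadd/NegInf]_(i < n) A i i.

Definition smulmx (m n p : nat) (A : 'M[stv G]_(m, n)) (B : 'M[stv G]_(n, p))
  : 'M[stv G]_(m, p) :=
  \matrix_(i, j) \big[sadd/NegInf]_(k < n) smul (A i k) (B k j).

Definition sadj (n : nat) (A : 'M[stv G]_n) : 'M[stv G]_n :=
  \matrix_(i, j) sdet (row' j (col' i A)).

(* inverse of an element; only meaningful for tangible elements *)
Definition sinv (x : stv G) : stv G :=
  match x with NegInf => NegInf | Tan a => Tan (- a) | Gh a => Gh (- a) end.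

Definition snabla (n : nat) (A : 'M[stv G]_n) : 'M[stv G]_n :=
  \matrix_(i, j) smul (sinv (sdet A)) (sadj A i j).

End Supertropical.

(* Main.v *)
From HB Require Import structures.
Require Import Defs.
From mathcomp Require Import all_boot all_order all_algebra all_fingroup.
Set Implicit Arguments. Unset Strict Implicit. Unset Printing Implicit Defensive.
Import GRing.Theory.
Local Open Scope ring_scope.

Section S.
Variables (G : zmodType) (le : rel G) (Hle : ordered_abgroup le).

Let leR : reflexive le. Proof. by case: Hle. Qed.
Let leA : antisymmetric le. Proof. by case: Hle. Qed.
Let leT : transitive le. Proof. by case: Hle. Qed.
Let leTot : total le. Proof. by case: Hle. Qed.
Let leD : forall a b c, le a b -> le (a + c) (b + c). Proof. by case: Hle. Qed.

Lemma leD2r a b c : le (a + c) (b + c) = le a b.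
Proof.
apply/idP/idP; last exact: leD.
by move/(leD (-c)); rewrite -!addrA subrr !addr0.
Qed.

Lemma ltGE a b : ltG le a b = ~~ le b a.
Proof. rewrite /ltG; case: (boolP (le b a)) => h; rewrite ?andbF ?andbT //.
by have := leTot a b; rewrite (negbTE h) orbF. Qed.

Lemma nle_le a b : ~~ le a b -> le b a.
Proof. by move=> h; have := leTot a b; rewrite (negbTE h). Qed.

Local Notation sadd := (sadd le).
Local Notation smul := (smul (G:=G)).

Ltac lecases := repeat match goal with
 | |- context [le ?a ?b] => case: (boolP (le a b)) => ?
 end.

Ltac lesolve := repeat match goal with
 | H : is_true (~~ le ?a ?a) |- _ => by rewrite leR in H
 | H1 : is_true (~~ le ?a ?b), H2 : is_true (~~ le ?b ?a) |- _ =>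
     by have := leTot a b; rewrite (negbTE H1) (negbTE H2)
 | H1 : is_true (le ?a ?b), H2 : is_true (le ?b ?c), H3 : is_true (~~ le ?a ?c) |- _ =>
     by rewrite (leT H1 H2) in H3
 | H1 : is_true (~~ le ?a ?b) |- _ =>
     lazymatch goal with H : is_true (le b a) |- _ => fail | _ => have ? := nle_le H1 end
 | H1 : is_true (le ?a ?b), H2 : is_true (le ?b ?a) |- _ =>
     have ? := leA (introT andP (conj H1 H2)); subst; clear H1 H2
 end.


Ltac lefin := try done; try match goal with
  | H : is_true (~~ ?b) |- ?b = false => exact: negbTE H
  | H : is_true ?b |- ?b = true => exact: H
  | H : is_true (~~ ?b) |- false = ?b => exact: esym (negbTE H)
  | H : is_true ?b |- true = ?b => exact: esym H
  end.

Lemma saddC : commutative sadd.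
Proof.
case=> [|a|a] [|b|b] //=; rewrite /Defs.sadd /= !ltGE; lecases => //=; lesolve; lefin.
Qed.

Lemma saddA : associative sadd.
Proof.
case=> [|a|a] [|b|b] [|c|c] //=; rewrite ?/Defs.sadd /= ?ltGE; lecases => //=;
  rewrite ?ltGE; lecases => //=; lesolve; lefin.
Qed.

Lemma add0s : left_id NegInf sadd. Proof. by case. Qed.
Lemma adds0 : right_id NegInf sadd. Proof. by case. Qed.

Lemma smulA : associative smul.
Proof. by case=> [|a|a] [|b|b] [|c|c] //=; rewrite addrA. Qed.
Lemma smulC : commutative smul.
Proof. by case=> [|a|a] [|b|b] //=; rewrite addrC. Qed.
Lemma mul1s : left_id (sone G) smul.
Proof. by case=> [|a|a] //=; rewrite /sone /= add0r. Qed.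
Lemma muls1 : right_id (sone G) smul.
Proof. by move=> x; rewrite smulC mul1s. Qed.
Lemma smulCA x y z : smul x (smul y z) = smul y (smul x z).
Proof. by rewrite smulA [smul x y]smulC -smulA. Qed.
Lemma ac3 x y z : smul (smul x y) z = smul y (smul z x).
Proof. by rewrite [smul x y]smulC -smulA [smul x z]smulC. Qed.
Lemma mul0s : left_zero NegInf smul. Proof. by case. Qed.
Lemma muls0 : right_zero NegInf smul. Proof. by case=> [|a|a]. Qed.

Lemma smulDl : left_distributive smul sadd.
Proof.
case=> [|a|a] [|b|b] [|c|c] //=; rewrite ?/Defs.sadd /= ?ltGE ?leD2r;
  lecases => //=; lesolve; lefin.
Qed.
Lemma smulDr : right_distributive smul sadd.
Proof. by move=> x y z; rewrite ![smul x _]smulC smulDl. Qed.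

HB.instance Definition _ := Monoid.isComLaw.Build (stv G) NegInf sadd saddA saddC add0s.
HB.instance Definition _ := Monoid.isComLaw.Build (stv G) (sone G) smul smulA smulC mul1s.
HB.instance Definition _ := Monoid.isMulLaw.Build (stv G) NegInf smul mul0s muls0.
HB.instance Definition _ := Monoid.isAddLaw.Build (stv G) smul sadd smulDl smulDr.


Definition bnd (x : stv G) (g : G) : bool :=
  match x with NegInf => true | Tan a => le a g | Gh a => le a g end.
Definition lbd (g : G) (x : stv G) : bool :=
  match x with NegInf => false | Tan a => le g a | Gh a => le g a end.
Definition gn (x : stv G) : bool := if x is Tan _ then false else true.

Lemma leDD a b c d : le a b -> le c d -> le (a + c) (b + d).
Proof.
move=> h1 h2; apply: (leT (leD c h1)); rewrite ![b + _]addrC; exact: leD.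
Qed.

Lemma bnd_sadd x y g : bnd (sadd x y) g = bnd x g && bnd y g.
Proof.
case: x y => [|a|a] [|b|b] //=; rewrite ?andbT ?/Defs.sadd /= ?ltGE;
  lecases => //=; lesolve; lefin.
Qed.

Lemma lbd_sadd g x y : lbd g (sadd x y) = lbd g x || lbd g y.
Proof.
case: x y => [|a|a] [|b|b] //=; rewrite ?orbF ?/Defs.sadd /= ?ltGE;
  lecases => //=; lesolve; lefin.
Qed.

Lemma bnd_smul x y g h : bnd x g -> bnd y h -> bnd (smul x y) (g + h).
Proof. by case: x y => [|a|a] [|b|b] //=; apply: leDD. Qed.

Lemma lbd_smul x y g h : lbd g x -> lbd h y -> lbd (g + h) (smul x y).
Proof. by case: x y => [|a|a] [|b|b] //=; apply: leDD. Qed.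

Lemma gn_sadd x y : gn x -> gn y -> gn (sadd x y).
Proof.
case: x y => [|a|a] [|b|b] //=; rewrite ?/Defs.sadd /= ?ltGE;
  lecases => //=; lesolve; lefin.
Qed.

Lemma gn_smull x y : gn x -> gn (smul x y).
Proof. by case: x y => [|a|a] [|b|b]. Qed.
Lemma gn_smulr x y : gn y -> gn (smul x y).
Proof. by case: x y => [|a|a] [|b|b]. Qed.

Lemma gn_double x : gn (sadd x x).
Proof. by case: x => [|a|a] //=; rewrite /Defs.sadd /= ltGE leR. Qed.

Lemma exact_nu x g : bnd x g -> lbd g x -> x = Tan g \/ x = Gh g.
Proof.
by case: x => [|a|a] //= h1 h2; have := leA (introT andP (conj h1 h2)) => ->; [left|right].
Qed.

Local Notation gs := (gs le).

Lemma gs_refl x : gs x x. Proof. by left. Qed.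

Lemma gs_trans x y z : gs x y -> gs y z -> gs x z.
Proof.
case=> [->|] //; case: x => [|a|a] //= h1 [<-|]; first by right.
case: y h1 => [|b|b] //=; case: z => [|c|c] //= h1 h2; right => //=; exact: leT h2 h1.
Qed.

Lemma gs_gn z : gn z -> gs z NegInf.
Proof. by case: z => [|a|a] //= _; [left|right]. Qed.

Lemma gs_saddl x y z : gs x y -> gs (sadd x z) (sadd y z).
Proof.
case=> [->|]; first exact: gs_refl.
case: x => [|a|a] //; case: y => [|b|b] //= h; case: z => [|c|c];
  rewrite /gs ?/Defs.sadd /= ?ltGE; lecases => //=; lesolve;
  try by [left|right].
Qed.

Lemma gs_smull x y z : gs x y -> gs (smul x z) (smul y z).
Proof.
case=> [->|]; first exact: gs_refl.
case: x => [|a|a] //; case: y => [|b|b] //= h; case: z => [|c|c] /=;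
  try by [left|right]; by right => //=; rewrite leD2r.
Qed.

Lemma gs_tan x a : gs x (Tan a) -> gn x = false -> x = Tan a.
Proof. by case=> // ; case: x. Qed.


Section Bigs.
Variable I : eqType.

Lemma bnd_big (r : seq I) (P : pred I) F g :
  (forall i, P i -> bnd (F i) g) -> bnd (\big[sadd/NegInf]_(i <- r | P i) F i) g.
Proof. by move=> h; apply: (big_ind (fun x => bnd x g)) => // x y hx hy; rewrite bnd_sadd hx hy. Qed.

Lemma gn_big (r : seq I) (P : pred I) F :
  (forall i, P i -> gn (F i)) -> gn (\big[sadd/NegInf]_(i <- r | P i) F i).
Proof. by move=> h; apply: (big_ind gn) => // x y; apply: gn_sadd. Qed.

Lemma gs_sadd a b x y : gs a b -> gs x y -> gs (sadd a x) (sadd b y).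
Proof.
move=> h1 h2; apply: (gs_trans (gs_saddl x h1)).
rewrite ![sadd b _]saddC; exact: gs_saddl.
Qed.

Lemma gs_big (r : seq I) (P : pred I) F H :
  (forall i, P i -> gs (F i) (H i)) ->
  gs (\big[sadd/NegInf]_(i <- r | P i) F i) (\big[sadd/NegInf]_(i <- r | P i) H i).
Proof.
move=> h; apply: (big_rec2 (fun x y => gs x y)); first exact: gs_refl.
by move=> i x y Pi hxy; apply: gs_sadd => //; apply: h.
Qed.

Lemma bnd_prod (r : seq I) (P : pred I) F g :
  (forall i, P i -> bnd (F i) (g i)) ->
  bnd (\big[smul/sone G]_(i <- r | P i) F i) (\sum_(i <- r | P i) g i).
Proof.
move=> h; apply: (big_rec2 (fun x s => bnd x s)); first exact: leR.
by move=> i x s Pi hx; apply: bnd_smul => //; apply: h.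
Qed.

Lemma lbd_prod (r : seq I) (P : pred I) F g :
  (forall i, P i -> lbd (g i) (F i)) ->
  lbd (\sum_(i <- r | P i) g i) (\big[smul/sone G]_(i <- r | P i) F i).
Proof.
move=> h; apply: (big_rec2 (fun s x => lbd s x)); first exact: leR.
by move=> i s x Pi hx; apply: lbd_smul => //; apply: h.
Qed.

Lemma lbd_attain (r : seq I) (P : pred I) F g :
  lbd g (\big[sadd/NegInf]_(i <- r | P i) F i) ->
  exists i, [/\ i \in r, P i & lbd g (F i)].
Proof.
elim: r => [|x r IH]; first by rewrite big_nil.
rewrite big_cons; case: ifP => Px; last first.
  by case/IH => i [h1 h2 h3]; exists i; rewrite inE h1 orbT.
rewrite lbd_sadd => /orP [h|/IH [i [h1 h2 h3]]]; first by exists x; rewrite inE eqxx.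
by exists i; rewrite inE h1 orbT.
Qed.

Lemma lbd_sub (r : seq I) (P : pred I) F g i :
  i \in r -> P i -> lbd g (F i) -> lbd g (\big[sadd/NegInf]_(i <- r | P i) F i).
Proof.
elim: r => [|x r IH] //; rewrite inE big_cons => /orP [/eqP <-|h] Pi hi.
  by rewrite Pi lbd_sadd hi.
by case: ifP => _; rewrite ?lbd_sadd IH ?orbT.
Qed.

Lemma bnd_sub (r : seq I) (P : pred I) F g i :
  i \in r -> P i -> bnd (\big[sadd/NegInf]_(i <- r | P i) F i) g -> bnd (F i) g.
Proof.
elim: r => [|x r IH] //; rewrite inE big_cons => /orP [/eqP <-|h] Pi.
  by rewrite Pi bnd_sadd => /andP[].
case: ifP => _; rewrite ?bnd_sadd; last exact: IH.
by case/andP=> _; apply: IH.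
Qed.

End Bigs.


Definition term n (M : 'M[stv G]_n) (s : 'S_n) := \big[smul/sone G]_(i < n) M i (s i).

Lemma sdetE n (M : 'M[stv G]_n) : sdet le M = \big[sadd/NegInf]_(s : 'S_n) term M s.
Proof. by []. Qed.

Lemma term_lift n (M : 'M[stv G]_n.+1) j k (t : 'S_n) :
  term M (lift_perm j k t) = smul (M j k) (term (row' j (col' k M)) t).
Proof.
rewrite /term (bigD1_ord j) //= lift_perm_id; congr smul.
by apply: eq_bigr => i _; rewrite !mxE lift_perm_lift.
Qed.

Lemma laplace n (M : 'M[stv G]_n.+1) j :
  sdet le M = \big[sadd/NegInf]_k smul (M j k) (sdet le (row' j (col' k M))).
Proof.
rewrite sdetE (partition_big (fun s : 'S_n.+1 => s j) predT) //=.
apply: eq_bigr => k _.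
rewrite (reindex (lift_perm j k)); last first.
  pose ulsf i (s : 'S_n.+1) k1 := odflt k1 (unlift (s i) (s (lift i k1))).
  have ulsfK i (s : 'S_n.+1) k1: lift (s i) (ulsf i s k1) = s (lift i k1).
    rewrite /ulsf; have:= neq_lift i k1.
    by rewrite -(can_eq (permK s)) => /unlift_some[] ? ? ->.
  have inj_ulsf: injective (ulsf j _).
    move=> s; apply: can_inj (ulsf (s j) s^-1%g) _ => k'.
    by rewrite {1}/ulsf ulsfK !permK liftK.
  exists (fun s => perm (inj_ulsf s)) => [s _ | s].
    by apply/permP=> k'; rewrite permE /ulsf lift_perm_lift lift_perm_id liftK.
  move/(s _ =P _) => si0; apply/permP=> k0.
  case: (unliftP j k0) => [k'|] ->; rewrite ?lift_perm_id //.
  by rewrite lift_perm_lift -si0 permE ulsfK.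
rewrite sdetE big_distrr /=.
apply: eq_big => [s | s _]; first by rewrite lift_perm_id eqxx.
exact: term_lift.
Qed.

Lemma gn_invol (I : finType) (P : pred I) (h : I -> I) (F : I -> stv G) :
  involutive h -> (forall x, P x -> [/\ P (h x), h x != x & F (h x) = F x]) ->
  gn (\big[sadd/NegInf]_(x | P x) F x).
Proof.
move=> hK hP.
rewrite (bigID (fun x => enum_rank x < enum_rank (h x))%N) /=.
set S := \big[sadd/NegInf]_(i | P i && _) F i.
suff -> : \big[sadd/NegInf]_(i | P i && ~~ (enum_rank i < enum_rank (h i))%N) F i = S.
  exact: gn_double.
rewrite (reindex_inj (inv_inj hK)) /S; apply: eq_big => [x|x /andP[Px _]]; last first.
  by have [_ _] := hP _ Px; rewrite hK => ->.
rewrite hK; case Px: (P x) => /=.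
  have [-> hx _] := hP x Px; rewrite /= -leqNgt leq_eqVlt.
  suff /negbTE -> : (enum_rank x : nat) != enum_rank (h x) by [].
  by rewrite (inj_eq val_inj) (inj_eq enum_rank_inj) eq_sym.
case Phx: (P (h x)) => //=; have [] := hP _ Phx; by rewrite hK Px.
Qed.

Lemma gn_rows n (M : 'M[stv G]_n) r1 r2 :
  r1 != r2 -> (forall c, M r1 c = M r2 c) -> gn (sdet le M).
Proof.
move=> r12 hM; rewrite sdetE.
apply: (@gn_invol _ predT (fun s => tperm r1 r2 * s)%g); first exact: tpermKg.
move=> s _; split => //.
  apply/eqP => /(congr1 (fun p : 'S_n => p r1)); rewrite permM tpermL => /perm_inj.
  by move/eqP; rewrite eq_sym (negbTE r12).
rewrite /term (reindex_inj (@perm_inj _ (tperm r1 r2))) /=.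
apply: eq_bigr => i _; rewrite permM tpermK.
by case: tpermP => [->|->|] //; rewrite hM.
Qed.


Definition swp n (f : {ffun 'I_n -> 'I_n}) : 'S_n :=
  if [pick ij : 'I_n * 'I_n | (ij.1 != ij.2) && (f ij.1 == f ij.2)] is Some ij
  then tperm ij.1 ij.2 else 1%g.

Lemma gn_noninj n (X Y : 'M[stv G]_n) :
  gn (\big[sadd/NegInf]_(f : {ffun 'I_n -> 'I_n} | ~~ injectiveb f)
       \big[sadd/NegInf]_(s : 'S_n)
         smul (\big[smul/sone G]_i X i (f i)) (\big[smul/sone G]_i Y (f i) (s i))).
Proof.
rewrite pair_big /=.
apply: (@gn_invol _ _ (fun p => (p.1, swp p.1 * p.2)%g)).
  move=> [f s] /=; rewrite mulgA; congr pair; rewrite /swp.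
  by case: pickP => [ij _|_]; rewrite ?tperm2 ?mul1g.
move=> [f s] /= hf.
rewrite /swp; case: pickP => [[i1 i2] /= /andP [h12 hf12]|none]; last first.
  move: hf; rewrite andbT => /injectiveP; case; move=> x y fxy; apply/eqP; apply: contraT => hxy.
  by have := none (x, y); rewrite /= hxy fxy eqxx.
split => //.
  apply/eqP => [[]] /(congr1 (fun p : 'S_n => p i1)); rewrite permM tpermL => /perm_inj.
  by move/eqP; rewrite eq_sym (negbTE h12).
congr smul.
rewrite (reindex_inj (@perm_inj _ (tperm i1 i2))) /=.
apply: eq_bigr => i _; rewrite permM tpermK.
by case: tpermP => [->|->|] //; rewrite (eqP hf12).
Qed.

Lemma binet n (X Y : 'M[stv G]_n) :
  gs (sdet le (smulmx le X Y)) (smul (sdet le X) (sdet le Y)).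
Proof.
rewrite sdetE.
have E s : term (smulmx le X Y) s = \big[sadd/NegInf]_(f : {ffun 'I_n -> 'I_n})
    smul (\big[smul/sone G]_i X i (f i)) (\big[smul/sone G]_i Y (f i) (s i)).
  rewrite /term; under eq_bigr do rewrite mxE.
  rewrite bigA_distr_bigA; apply: eq_bigr => f _; by rewrite big_split.
under eq_bigr do rewrite E.
rewrite exchange_big /= (bigID (fun f : {ffun 'I_n -> 'I_n} => injectiveb f)) /=.
rewrite -[X in gs _ X]adds0; apply: gs_sadd; last exact/gs_gn/gn_noninj.
suff -> : \big[sadd/NegInf]_(f : {ffun 'I_n -> 'I_n} | injectiveb f)
       \big[sadd/NegInf]_(s : 'S_n)
         smul (\big[smul/sone G]_i X i (f i)) (\big[smul/sone G]_i Y (f i) (s i))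
     = smul (sdet le X) (sdet le Y) by exact: gs_refl.
rewrite (reindex (fun t : 'S_n => pval t)); last first.
  exists (fun f => insubd (1%g : 'S_n) f) => [t _|f]; first exact: valKd.
  by rewrite inE => hf; apply: insubdK.
rewrite (eq_bigl predT); last by move=> t; exact: (valP t).
rewrite sdetE big_distrl /=; apply: eq_bigr => t _.
rewrite -big_distrr /=; congr smul.
  by apply: eq_bigr => i _; rewrite pvalE.
rewrite sdetE (reindex_inj (mulgI t)); apply: eq_bigr => s _.
rewrite /term [RHS](reindex_inj (@perm_inj _ t)); apply: eq_bigr => i _.
by rewrite pvalE permM.
Qed.


Definition nuG (x : stv G) : G := match x with NegInf => 0 | Tan a => a | Gh a => a end.

Lemma finite_nu x : x <> NegInf -> bnd x (nuG x) /\ lbd (nuG x) x.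
Proof. by case: x => [|a|a] //= _; rewrite leR. Qed.

Lemma bnd_le x g h : bnd x g -> le g h -> bnd x h.
Proof. by case: x => [|a|a] //= h1 h2; apply: leT h2. Qed.
Lemma lbd_le x g h : lbd h x -> le g h -> lbd g x.
Proof. by case: x => [|a|a] //= h1 h2; apply: leT h1. Qed.
Lemma lbd_bnd x g h : lbd g x -> bnd x h -> le g h.
Proof. by case: x => [|a|a] //= h1 h2; apply: leT h2. Qed.
Lemma lbd_fin g x : lbd g x -> x <> NegInf. Proof. by case: x. Qed.

Lemma leDl a b c : le a b -> le (c + a) (c + b).
Proof. by rewrite ![c + _]addrC; apply: leD. Qed.

Lemma le_addsub y a b : le (y + a) b -> le y (b - a).
Proof. by move/(leD (-a)); rewrite addrK. Qed.
Lemma le_subadd y a b : le b (a + y) -> le (b - a) y.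
Proof. by move/(leD (-a)); rewrite [a + y]addrC addrK. Qed.

Lemma bnd_smul_inv x y a b : lbd a x -> bnd (smul x y) b -> bnd y (b - a).
Proof.
case: x => [|x|x] //; case: y => [|y|y] //= h1 h2; apply: le_addsub;
  apply: leT h2; rewrite [y + a]addrC; exact: leD.
Qed.

Lemma lbd_smul_inv x y a b : bnd x a -> lbd b (smul x y) -> lbd (b - a) y.
Proof.
case: x => [|x|x] //; case: y => [|y|y] //= h1 h2; apply: le_subadd;
  apply: leT h2 _; exact: leD.
Qed.

Lemma bnd_smulT_inv x t g : bnd (smul x (Tan t)) g -> bnd x (g - t).
Proof. by case: x => [|x|x] //= h; apply: le_addsub. Qed.

Lemma prod_tan (I : Type) (r : seq I) (P : pred I) (f : I -> G) :
  \big[smul/sone G]_(i <- r | P i) Tan (f i) = Tan (\sum_(i <- r | P i) f i).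
Proof. by apply: (big_rec2 (fun x a => x = Tan a)) => // i x a _ ->. Qed.

Lemma arith x y z wi wj : le x wj -> le wi (x + y) -> le (y + z) 0 -> le z (wj - wi).
Proof.
move=> h1 h2 h3; apply: le_addsub; apply: leT (leDl z h2) _.
rewrite [x + y]addrC addrA [z + y]addrC; apply: leT (leD x h3) _; by rewrite add0r.
Qed.

Lemma tri X Y Z a b : bnd X b -> lbd a (smul X Y) -> bnd (smul Y Z) 0 -> bnd Z (b - a).
Proof.
case: X => [|x|x] //; case: Y => [|y|y] //; case: Z => [|z|z] //= h1 h2 h3;
  exact: arith h1 h2 h3.
Qed.

Section Pot.
Variables (n : nat) (A : 'M[stv G]_n) (sg : 'S_n) (d0 : G).
Hypothesis hopt : forall s, bnd (term A s) d0.
Hypothesis hsg : lbd d0 (term A sg).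

Let alpha i := nuG (A i (sg i)).

Lemma halpha i : bnd (A i (sg i)) (alpha i) /\ lbd (alpha i) (A i (sg i)).
Proof.
apply: finite_nu => h; move: hsg; rewrite /term (bigD1 i) //= h.
by rewrite /Defs.smul.
Qed.

Lemma sum_alpha : \sum_i alpha i = d0.
Proof.
apply: leA; apply/andP; split.
  apply: lbd_bnd (hopt sg); apply: lbd_prod => i _; exact: (halpha i).2.
apply: lbd_bnd hsg _; apply: bnd_prod => i _; exact: (halpha i).1.
Qed.

Definition e i j := smul (A i (sg j)) (Tan (- alpha i)).

Fixpoint pv (x : 'I_n) (s : seq 'I_n) : stv G :=
  if s is y :: s' then smul (e x y) (pv y s') else sone G.

Lemma pv_rcons x s y : pv x (rcons s y) = smul (pv x s) (e (last x s) y).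
Proof.
elim: s x => [|z s IH] x /=.
  by rewrite muls1; case: (e x y) => [|b|b] //=; rewrite add0r.
by rewrite IH smulA.
Qed.

Lemma pv_cat x s1 y s2 : pv x (s1 ++ y :: s2) = smul (pv x (rcons s1 y)) (pv y s2).
Proof.
elim: s1 x => [|z s1 IH] x /=; first by rewrite muls1.
by rewrite IH smulA.
Qed.

Lemma pv_path f x s : path (frel f) x s ->
  pv x s = \big[smul/sone G]_(y <- belast x s) e y (f y).
Proof.
elim: s x => [|y s IH] x /=; first by rewrite big_nil.
by case/andP => /eqP <- hp; rewrite big_cons IH.
Qed.

Fixpoint allseq k : seq (seq 'I_n) :=
  if k is k'.+1 then [::] :: [seq x :: s | x <- enum 'I_n, s <- allseq k']
  else [:: [::]].

Lemma mem_allseq k s : (size s <= k)%N -> s \in allseq k.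
Proof.
elim: k s => [|k IH] [|x s] //=; rewrite ?inE //= ltnS => hs.
apply: (allpairs_f (fun x s => x :: s)); first by rewrite mem_enum.
exact: IH.
Qed.

Definition okp j (p : seq 'I_n) :=
  uniq p && (if p is x :: s then last x s == j else false).
Definition pq (p : seq 'I_n) := if p is x :: s then pv x s else NegInf.
Definition W j := \big[sadd/NegInf]_(p <- allseq n | okp j p) pq p.

Lemma ok_mem j p : okp j p -> p \in allseq n.
Proof.
case/andP => /card_uniqP hu _; apply: mem_allseq.
by rewrite -hu; apply: leq_trans (max_card _) _; rewrite card_ord.
Qed.

Lemma W_lbd j : lbd 0 (W j).
Proof.
have ok : okp j [:: j] by rewrite /okp /= eqxx.
rewrite /W; apply: (lbd_sub (ok_mem ok) ok); by rewrite /= leR.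
Qed.

Let w j := nuG (W j).
Lemma hw j : bnd (W j) (w j) /\ lbd (w j) (W j).
Proof. exact/finite_nu/(lbd_fin (W_lbd j)). Qed.

Lemma cycle_bnd j p2 : uniq (j :: p2) -> bnd (smul (pv j p2) (e (last j p2) j)) 0.
Proof.
move=> U; rewrite -pv_rcons.
have hp : path (frel (next (j :: p2))) j (rcons p2 j) := cycle_next U.
rewrite (pv_path hp) belast_rcons (big_uniq _ U) /=.
set C := j :: p2.
pose rho : 'S_n := perm (can_inj (prev_next U)).
have := hopt (rho * sg)%g.
rewrite /term (bigID (fun y => y \in C)) /=.
rewrite (eq_bigr (fun y => A y (sg (next C y)))); last by move=> y _; rewrite permM permE.
rewrite [X in smul _ X](eq_bigr (fun y => A y (sg y))); last first.
  by move=> y hy; rewrite permM permE next_nth (negbTE hy).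
rewrite smulC => h.
have hQ : lbd (\sum_(y | y \notin C) alpha y) (\big[smul/sone G]_(y | y \notin C) A y (sg y)).
  by apply: lbd_prod => y _; exact: (halpha y).2.
have := bnd_smul_inv hQ h => {}h.
rewrite (eq_bigr (fun y => smul (A y (sg (next C y))) (Tan (- alpha y)))) //.
rewrite big_split prod_tan.
have ht : bnd (Tan (\sum_(i in C) - alpha i)) (\sum_(i in C) - alpha i) by exact: leR.
apply: bnd_le (bnd_smul h ht) _.
rewrite -sum_alpha (bigID (fun y => y \in C)) /= addrK sumrN subrr; exact: leR.
Qed.

Lemma okp_cat i p1 j p2 :
  okp i (p1 ++ j :: p2) = uniq (p1 ++ j :: p2) && (last j p2 == i).
Proof. by case: p1 => [|x p1] //=; rewrite /okp /= last_cat. Qed.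
Lemma okp_rcons p1 j : uniq (rcons p1 j) -> okp j (rcons p1 j).
Proof. by move=> hu; rewrite /okp hu; case: p1 {hu} => [|x p1] //=; rewrite last_rcons. Qed.

Lemma pq_cat p1 j p2 : pq (p1 ++ j :: p2) = smul (pq (rcons p1 j)) (pv j p2).
Proof.
case: p1 => [|x p1]; first by change (pv j p2 = smul (sone G) (pv j p2)); rewrite mul1s.
by change (pv x (p1 ++ j :: p2) = smul (pv x (rcons p1 j)) (pv j p2)); exact: pv_cat.
Qed.
Lemma edge_bnd i j : bnd (e i j) (w j - w i).
Proof.
have [p [pin ok hp]] := lbd_attain (hw i).2.
case: (boolP (j \in p)) => hj.
  case/splitPr: hj ok hp pin => p1 p2 ok hp _.
  move: ok; rewrite okp_cat => /andP [U /eqP hi].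
  move: U; rewrite cat_uniq /= => /and4P [U1 hn hj2 U2].
  have U3 : uniq (j :: p2) by rewrite /= hj2.
  have Ur : uniq (rcons p1 j).
    rewrite rcons_uniq U1 andbT; apply/negP => hj1.
    by move: hn; rewrite negb_or; case/andP; rewrite hj1.
  have hb : bnd (pq (rcons p1 j)) (w j).
    apply: (bnd_sub _ (okp_rcons Ur) (hw j).1); exact/ok_mem/okp_rcons.
  rewrite pq_cat in hp.
  have := cycle_bnd U3; rewrite hi => hc.
  exact: tri hb hp hc.
case: p ok hp hj pin => [|x s] // /andP [U /eqP hi] /= hp hj _.
have ok' : okp j (x :: rcons s j).
  by rewrite /okp -rcons_cons rcons_uniq hj U /= last_rcons eqxx.
have := bnd_sub _ ok' (hw j).1; rewrite /= pv_rcons hi => h.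
exact: bnd_smul_inv hp (h (ok_mem ok')).
Qed.

Lemma potentials : exists u v : 'I_n -> G,
  (forall r c, bnd (A r c) (u r + v c)) /\ \sum_i u i + \sum_i v i = d0.
Proof.
exists (fun r => alpha r - w r), (fun c => w ((sg^-1)%g c)); split.
  move=> r c; have := edge_bnd r (sg^-1%g c); rewrite /e permKV => /bnd_smulT_inv h.
  apply: bnd_le h _; rewrite opprK [X in le X _]addrC [X in le X _]addrA [X in le X _]addrAC; exact: leR.
rewrite [X in _ + X](reindex_inj (@perm_inj _ sg)) /=.
under [X in _ + X]eq_bigr do rewrite permK.
by rewrite sumrB subrK sum_alpha.
Qed.

End Pot.


Lemma perm_decomp n (s : 'S_n.+1) j : exists t, s = lift_perm j (s j) t.
Proof.
pose ulsf (s : 'S_n.+1) k1 := odflt k1 (unlift (s j) (s (lift j k1))).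
have ulsfK (s0 : 'S_n.+1) k1: lift (s0 j) (ulsf s0 k1) = s0 (lift j k1).
  rewrite /ulsf; have:= neq_lift j k1.
  by rewrite -(can_eq (permK s0)) => /unlift_some[] ? ? ->.
have inj_ulsf: injective (ulsf s).
  apply: (@can_inj _ _ _ (fun k1 => odflt k1 (unlift j (s^-1%g (lift (s j) k1))))) => k'.
  by rewrite ulsfK !permK liftK.
exists (perm inj_ulsf); apply/permP=> k0.
case: (unliftP j k0) => [k'|] ->; rewrite ?lift_perm_id //.
by rewrite lift_perm_lift permE ulsfK.
Qed.

Lemma sum_lift n (f : 'I_n.+1 -> G) (k : 'I_n.+1) : \sum_(r < n) f (lift k r) = \sum_i f i - f k.
Proof. by rewrite (bigD1_ord k) //= [f k + _]addrC addrK. Qed.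

Lemma minor_bnd n (A : 'M[stv G]_n.+1) (u v : 'I_n.+1 -> G) i j :
  (forall r c, bnd (A r c) (u r + v c)) ->
  bnd (sdet le (row' j (col' i A))) ((\sum_r u r - u j) + (\sum_c v c - v i)).
Proof.
move=> huv; rewrite sdetE; apply: bnd_big => t _.
rewrite -(sum_lift u) -(sum_lift v).
rewrite [X in bnd _ (_ + X)](reindex_inj (@perm_inj _ t)) /= -big_split /=.
apply: bnd_prod => r _; rewrite !mxE; exact: huv.
Qed.


Lemma idG (U V a b : G) : -(U + V) + ((U - a) + (V - b)) = - a - b.
Proof. by rewrite addrACA addKr. Qed.

Section Main.
Variables (n : nat) (A : 'M[stv G]_n.+1) (d0 : G).
Hypothesis hd : sdet le A = Tan d0.

Let N := snabla le A.

Lemma NE i j : N i j = smul (Tan (- d0)) (sdet le (row' j (col' i A))).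
Proof. by rewrite /N /snabla !mxE hd. Qed.

Lemma hopt s : bnd (term A s) d0.
Proof.
have : bnd (sdet le A) d0 by rewrite hd /= leR.
rewrite sdetE; apply: bnd_sub => //; exact: mem_index_enum.
Qed.

Lemma detN_exact : sdet le N = Tan (- d0) \/ sdet le N = Gh (- d0).
Proof.
have [sg [_ _ hsg]] : exists sg, [/\ sg \in index_enum 'S_n.+1, true & lbd d0 (term A sg)].
  by apply: lbd_attain; rewrite -sdetE hd /= leR.
have [u [v [huv hsum]]] := potentials hopt hsg.
apply: exact_nu.
  rewrite sdetE; apply: bnd_big => rho _.
  have -> : - d0 = \sum_i (- u (rho i) - v i).
    have hr : \sum_i u (rho i) = \sum_i u i by rewrite [RHS](reindex_inj (@perm_inj _ rho)).
    by rewrite big_split /= !sumrN hr -hsum opprD.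
  apply: bnd_prod => i _; rewrite NE.
  have ht : bnd (Tan (- d0)) (- d0) by exact: leR.
  apply: bnd_le (bnd_smul ht (minor_bnd i (rho i) huv)) _.
  by rewrite -{1}hsum idG; apply: leR.
rewrite sdetE; apply: (@lbd_sub _ _ _ _ _ (sg^-1)%g); [exact: mem_index_enum|by []|].
rewrite /term (reindex_inj (@perm_inj _ sg)) /=.
have -> : - d0 = \sum_j - nuG (A j (sg j)) by rewrite sumrN (sum_alpha hopt hsg).
apply: lbd_prod => j _; rewrite permK NE.
have [t ht] := perm_decomp sg j.
have hs : lbd d0 (term A (lift_perm j (sg j) t)) by rewrite -ht.
rewrite term_lift in hs.
have h1 := lbd_smul_inv (halpha hsg j).1 hs.
have h2 : lbd (d0 - nuG (A j (sg j))) (sdet le (row' j (col' (sg j) A))).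
  rewrite sdetE; apply: lbd_sub h1 => //; exact: mem_index_enum.
have := lbd_smul (_ : lbd (- d0) (Tan (- d0))) h2.
by rewrite addKr; apply; apply: leR.
Qed.


Lemma e_gs : gs (smul (sdet le N) (sdet le A)) (sone G).
Proof.
by case: detN_exact => ->; rewrite hd /=; [left|right]; rewrite addNr //= leR.
Qed.

Lemma det_part B : gs (sdet le (smulmx le (smulmx le N B) A)) (sdet le B).
Proof.
apply: gs_trans (binet _ _) _.
apply: gs_trans (gs_smull _ (binet _ _)) _.
rewrite -smulA [smul (sdet le B) _]smulC smulA.
by apply: gs_trans (gs_smull _ e_gs) _; rewrite mul1s; apply: gs_refl.
Qed.

Lemma Q_diag k : \big[sadd/NegInf]_i smul (A k i) (N i k) = sone G.
Proof.
under eq_bigr do rewrite NE smulCA.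
by rewrite -big_distrr -laplace hd /= addNr.
Qed.

Lemma Q_off l k : l != k -> gn (\big[sadd/NegInf]_i smul (A l i) (N i k)).
Proof.
move=> hlk; under eq_bigr do rewrite NE smulCA.
rewrite -big_distrr; apply: gn_smulr.
pose M : 'M[stv G]_n.+1 := \matrix_(r, c) if r == k then A l c else A r c.
have -> : \big[sadd/NegInf]_i smul (A l i) (sdet le (row' k (col' i A))) = sdet le M.
  rewrite (laplace M k); apply: eq_bigr => i _; rewrite mxE eqxx; congr smul.
  congr sdet; apply/matrixP => r c; rewrite !mxE eq_sym.
  by rewrite (negbTE (neq_lift k r)).
apply: (@gn_rows _ _ k l); first by rewrite eq_sym.
by move=> c; rewrite !mxE eqxx (negbTE hlk).
Qed.

Lemma trace_part B : gs (strace le (smulmx le (smulmx le N B) A)) (strace le B).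
Proof.
rewrite /strace.
have E : \big[sadd/NegInf]_i (smulmx le (smulmx le N B) A) i i =
    \big[sadd/NegInf]_k \big[sadd/NegInf]_l
       smul (B k l) (\big[sadd/NegInf]_i smul (A l i) (N i k)).
  transitivity (\big[sadd/NegInf]_i \big[sadd/NegInf]_l \big[sadd/NegInf]_k
                   smul (B k l) (smul (A l i) (N i k))).
    apply: eq_bigr => i _; rewrite mxE; apply: eq_bigr => l _.
    rewrite mxE big_distrl; apply: eq_bigr => k _.
    exact: ac3.
  rewrite exchange_big /=; under eq_bigr do rewrite exchange_big /=.
  rewrite exchange_big /=; apply: eq_bigr => k _; apply: eq_bigr => l _.
  by rewrite big_distrr.
rewrite E; apply: gs_big => k _.
rewrite (bigD1 k) //= Q_diag muls1 -[X in gs _ X]adds0.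
apply: gs_sadd (gs_refl _) (gs_gn _); apply: gn_big => l hl.
by apply: gn_smulr; apply: Q_off.
Qed.
End Main.


Lemma gs_eq x y : gs x y -> is_tangible x -> x = y.
Proof. by case=> // ; case: x. Qed.

Lemma main_sec n (A B B' : 'M[stv G]_n) : nonsingular le A ->
  B' = smulmx le (smulmx le (snabla le A) B) A ->
  (gs (sdet le B') (sdet le B) /\ (nonsingular le B' -> sdet le B' = sdet le B)) /\
  gs (strace le B') (strace le B).
Proof.
case: n A B B' => [|n] A B B'.
  move=> _ ->; have -> : smulmx le (smulmx le (snabla le A) B) A = B.
    by apply/matrixP => -[].
  by split; [split; [exact: gs_refl|by []]|exact: gs_refl].
rewrite /nonsingular; case hd: (sdet le A) => [|d0|d0] // _ ->.
have hdet := det_part hd B.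
split; last exact: (trace_part hd B).
by split => // hns; apply: gs_eq.
Qed.

End S.

Theorem mainTheorem6 (G : zmodType) (le : rel G) (Hle : ordered_abgroup le)
  (n : nat) (A B B' : 'M[stv G]_n) :
  nonsingular le A ->
  B' = smulmx le (smulmx le (snabla le A) B) A ->
  (gs le (sdet le B') (sdet le B) /\
   (nonsingular le B' -> sdet le B' = sdet le B)) /\
  gs le (strace le B') (strace le B).
Proof. exact: main_sec. Qed.
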